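(* Let $S=\{(X_m,y_m)\}_{m=1}^T\in\mathcal{S}_T$, let $\tau(1),\tau(2),\dots$ be i.i.d. uniform on $\{1,\dots,T\}$, and let $\bar w_k=\frac1k\sum_{t=1}^k w_t$. Then for every $k\ge1$, $$\mathbb{E}_\tau\Big[\frac1T\sum_{m=1}^T\|X_m\bar w_k-y_m\|^2\Big]\le\mathbb{E}_\tau\Big[\frac1T\sum_{m=1}^T\|(I-P_m)(\bar w_k-w^\star)\|^2\Big]\le\frac1k.$$
   Context: Let $d\ge 1$, $T\ge1$. A task is a pair $(X_m,y_m)$ with $X_m\in\mathbb{R}^{n_m\times d}$, $y_m\in\mathbb{R}^{n_m}$ and $\operatorname{rank}(X_m)<d$. $\mathcal{S}_T$ denotes the set of collections $S=\{(X_m,y_m)\}_{m=1}^T$ of $T$ tasks such that $\|X_m\|\le 1$ (spectral norm) for all $m$ and there exists $w\in\mathbb{R}^d$ with $\|w\|\le 1$ and $y_m=X_mw$ for all $m$. Given $S$ and an ordering $\tau:\mathbb{N}^+\to\{1,\dots,T\}$, the iterates are $w_0=0$ and $w_t=w_{t-1}+X_{\tau(t)}^+(y_{\tau(t)}-X_{\tau(t)}w_{t-1})$, with $A^+$ the Moore–Penrose pseudoinverse. $w^\star$ denotes the minimum Euclidean-norm vector with $X_mw^\star=y_m$ for all $m$. $P_m=I-X_m^+X_m$ is the orthogonal projection onto $\ker X_m$. *)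

(* Defs.v *)
From HB Require Import structures.
From Stdlib Require Import ClassicalEpsilon.
From mathcomp Require Import all_boot all_order all_algebra.
From mathcomp Require Import reals.
Set Implicit Arguments. Unset Strict Implicit. Unset Printing Implicit Defensive.
Import Order.TTheory GRing.Theory Num.Theory.
Local Open Scope ring_scope.

Definition sqnorm (R : realType) (p : nat) (v : 'cV[R]_p) : R :=
  \sum_(i < p) (v i 0) ^+ 2.

Definition spec_norm_le1 (R : realType) (p q : nat) (A : 'M[R]_(p, q)) : Prop :=
  forall v : 'cV[R]_q, sqnorm (A *m v) <= sqnorm v.

Definition is_MP (R : realType) (p q : nat) (A : 'M[R]_(p, q)) (B : 'M[R]_(q, p)) : Prop :=
  [/\ A *m B *m A = A, B *m A *m B = B, (A *m B)^T = A *m B & (B *m A)^T = B *m A].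

(* Moore-Penrose pseudoinverse (exists and is unique). *)
Definition pinv (R : realType) (p q : nat) (A : 'M[R]_(p, q)) : 'M[R]_(q, p) :=
  epsilon (inhabits 0) (fun B => is_MP A B).

Definition projker (R : realType) (p q : nat) (A : 'M[R]_(p, q)) : 'M[R]_q :=
  1%:M - pinv A *m A.

Definition in_ST (R : realType) (d T : nat) (n : 'I_T -> nat)
  (X : forall m : 'I_T, 'M[R]_(n m, d)) (y : forall m : 'I_T, 'cV[R]_(n m)) : Prop :=
  (forall m, (\rank (X m) < d)%N) /\
  (forall m, spec_norm_le1 (X m)) /\
  (exists w : 'cV[R]_d, sqnorm w <= 1 /\ forall m, X m *m w = y m).

Definition step (R : realType) (d T : nat) (n : 'I_T -> nat)
  (X : forall m : 'I_T, 'M[R]_(n m, d)) (y : forall m : 'I_T, 'cV[R]_(n m))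
  (w : 'cV[R]_d) (m : 'I_T) : 'cV[R]_d :=
  w + pinv (X m) *m (y m - X m *m w).

(* w_t for the ordering prefix s = [:: tau 1; ...; tau t], starting from w_0 = 0. *)
Definition iterate (R : realType) (d T : nat) (n : 'I_T -> nat)
  (X : forall m : 'I_T, 'M[R]_(n m, d)) (y : forall m : 'I_T, 'cV[R]_(n m))
  (s : seq 'I_T) : 'cV[R]_d :=
  foldl (step X y) 0 s.

(* bar w_k = (1/k) sum_{t=1}^k w_t, for the ordering prefix tau : 'I_k -> 'I_T
   (tau i is tau(i+1) of the paper). *)
Definition avg_iterate (R : realType) (d T : nat) (n : 'I_T -> nat)
  (X : forall m : 'I_T, 'M[R]_(n m, d)) (y : forall m : 'I_T, 'cV[R]_(n m))
  (k : nat) (tau : {ffun 'I_k -> 'I_T}) : 'cV[R]_d :=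
  k%:R^-1 *: \sum_(1 <= t < k.+1)
     iterate X y (take t [seq tau i | i <- enum 'I_k]).

Definition min_norm_sol (R : realType) (d T : nat) (n : 'I_T -> nat)
  (X : forall m : 'I_T, 'M[R]_(n m, d)) (y : forall m : 'I_T, 'cV[R]_(n m)) : 'cV[R]_d :=
  epsilon (inhabits 0) (fun w => (forall m, X m *m w = y m) /\
     forall v, (forall m, X m *m v = y m) -> sqnorm w <= sqnorm v).

(* Expectation over tau(1),...,tau(k) i.i.d. uniform on 'I_T
   (the quantities below only depend on the first k entries of tau). *)
Definition expect_unif (R : realType) (T k : nat) (F : {ffun 'I_k -> 'I_T} -> R) : R :=
  (T ^ k)%:R^-1 * \sum_(tau : {ffun 'I_k -> 'I_T}) F tau.

(* Main.v *)
Require Import Defs.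
From Stdlib Require Import ClassicalEpsilon.
From mathcomp Require Import all_boot all_order all_algebra.
From mathcomp Require Import reals.
From mathcomp Require Import ring lra.
Import Order.TTheory GRing.Theory Num.Theory.
Set Implicit Arguments. Unset Strict Implicit.
Local Open Scope ring_scope.

Lemma sqnorm_ge0 (R : realType) p (v : 'cV[R]_p) : 0 <= sqnorm v.
Proof. by apply: sumr_ge0 => i _; rewrite sqr_ge0. Qed.

Lemma sqnorm_tr (R : realType) p (v : 'cV[R]_p) : sqnorm v = (v^T *m v) 0 0.
Proof. by rewrite /sqnorm !mxE; apply: eq_bigr => i _; rewrite !mxE expr2. Qed.

Lemma sqnorm_eq0 (R : realType) p (v : 'cV[R]_p) : sqnorm v = 0 -> v = 0.
Proof.
move=> /eqP; rewrite psumr_eq0 => [/allP H|i _]; last by rewrite sqr_ge0.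
apply/matrixP => i j; rewrite (ord1 j) mxE.
have := H i (mem_index_enum i); rewrite /= sqrf_eq0 => /eqP //.
Qed.

Lemma sqnormN (R : realType) p (v : 'cV[R]_p) : sqnorm (- v) = sqnorm v.
Proof. by apply: eq_bigr => i _; rewrite mxE sqrrN. Qed.

Lemma sqnormZ (R : realType) p (a : R) (v : 'cV[R]_p) :
  sqnorm (a *: v) = a ^+ 2 * sqnorm v.
Proof. by rewrite /sqnorm mulr_sumr; apply: eq_bigr => i _; rewrite mxE exprMn. Qed.

Lemma mmT0 (R : realType) a b (M : 'M[R]_(a, b)) : M *m M^T = 0 -> M = 0.
Proof.
move=> H; apply/matrixP => i j; rewrite mxE.
have : (M *m M^T) i i = 0 by rewrite H mxE.
rewrite mxE => /eqP; rewrite psumr_eq0 => [/allP Hj|l _]; last first.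
  by rewrite mxE -expr2 sqr_ge0.
by have := Hj j (mem_index_enum j); rewrite /= mxE -expr2 sqrf_eq0 => /eqP.
Qed.

Lemma rowfree_unit (R : realType) r q (C : 'M[R]_(r, q)) :
  row_free C -> C *m C^T \in unitmx.
Proof.
move=> Hf; rewrite -row_free_unit -kermx_eq0; apply/eqP.
set K := kermx _.
have HK : K *m (C *m C^T) = 0 by apply/sub_kermxP.
have : (K *m C) *m (K *m C)^T = 0.
  by rewrite trmx_mul mulmxA -(mulmxA K) HK mul0mx.
have K0 : kermx C = 0 by apply/eqP; rewrite kermx_eq0.
by move/mmT0/sub_kermxP; rewrite K0 submx0 => /eqP.
Qed.

Lemma MP_fact (R : realType) p r q (B : 'M[R]_(p, r)) (C : 'M[R]_(r, q)) :
  C *m C^T \in unitmx -> B^T *m B \in unitmx ->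
  is_MP (B *m C) (C^T *m invmx (C *m C^T) *m invmx (B^T *m B) *m B^T).
Proof.
move=> HC HB.
have UT : (invmx (C *m C^T))^T = invmx (C *m C^T) by rewrite trmx_inv trmx_mul trmxK.
have VT : (invmx (B^T *m B))^T = invmx (B^T *m B) by rewrite trmx_inv trmx_mul trmxK.
have AG : B *m C *m (C^T *m invmx (C *m C^T) *m invmx (B^T *m B) *m B^T)
     = B *m invmx (B^T *m B) *m B^T.
  by rewrite !mulmxA -(mulmxA B C) -(mulmxA B) (mulmxV HC) mulmx1.
have GA : (C^T *m invmx (C *m C^T) *m invmx (B^T *m B) *m B^T) *m (B *m C)
     = C^T *m invmx (C *m C^T) *m C.
  by rewrite !mulmxA -(mulmxA _ B^T B) -(mulmxA _ (invmx _)) (mulVmx HB) mulmx1.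
split.
- rewrite AG !mulmxA -(mulmxA _ B^T B) -(mulmxA B (invmx (B^T *m B))).
  by rewrite (mulVmx HB) mulmx1.
- rewrite GA !mulmxA -(mulmxA _ C C^T) -(mulmxA C^T (invmx (C *m C^T))).
  by rewrite (mulVmx HC) mulmx1.
- by rewrite AG !trmx_mul trmxK VT mulmxA.
- by rewrite GA !trmx_mul trmxK UT mulmxA.
Qed.

Lemma MP_exists (R : realType) p q (A : 'M[R]_(p, q)) : exists B, is_MP A B.
Proof.
have HC : row_base A *m (row_base A)^T \in unitmx.
  by apply: rowfree_unit; apply: row_base_free.
have HB : (col_base A)^T *m col_base A \in unitmx.
  have := @rowfree_unit R _ _ (col_base A)^T; rewrite trmxK; apply.
  by rewrite /row_free mxrank_tr; have := col_base_full A; rewrite /row_full.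
have := MP_fact HC HB; rewrite mulmx_base => H; by eexists; exact H.
Qed.

Lemma pinvP (R : realType) p q (A : 'M[R]_(p, q)) : is_MP A (pinv A).
Proof.
rewrite /pinv; apply: (epsilon_spec (inhabits 0) (fun B => is_MP A B)).
exact: MP_exists.
Qed.

Lemma Qsym (R : realType) p q (A : 'M[R]_(p, q)) : (pinv A *m A)^T = pinv A *m A.
Proof. by case: (pinvP A). Qed.

Lemma Qidem (R : realType) p q (A : 'M[R]_(p, q)) :
  (pinv A *m A) *m (pinv A *m A) = pinv A *m A.
Proof. by case: (pinvP A) => _ H _ _; rewrite mulmxA H. Qed.

Lemma AQ (R : realType) p q (A : 'M[R]_(p, q)) : A *m (pinv A *m A) = A.
Proof. by case: (pinvP A) => H _ _ _; rewrite mulmxA H. Qed.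

Lemma sqnorm_decomp (R : realType) q (Q : 'M[R]_q) (v : 'cV[R]_q) :
  Q^T = Q -> Q *m Q = Q -> sqnorm v = sqnorm (Q *m v) + sqnorm (v - Q *m v).
Proof.
move=> QT QQ; rewrite !sqnorm_tr.
suff -> : v^T *m v = (Q *m v)^T *m (Q *m v) + (v - Q *m v)^T *m (v - Q *m v).
  by rewrite mxE.
rewrite !linearB /= !trmx_mul QT !mulmxBl !mulmxA.
by rewrite -!(mulmxA v^T Q Q) QQ subrr subr0 addrC subrK.
Qed.

Lemma ker_sum (R : realType) d T (n : 'I_T -> nat)
  (X : forall m : 'I_T, 'M[R]_(n m, d)) (z : 'cV[R]_d) :
  (\sum_(m < T) (X m)^T *m X m) *m z = 0 -> forall m, X m *m z = 0.
Proof.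
move=> H.
have E : \sum_(m < T) sqnorm (X m *m z) = 0.
  have : (z^T *m ((\sum_(m < T) (X m)^T *m X m) *m z)) 0 0 = 0.
    by rewrite H mulmx0 mxE.
  rewrite mulmx_suml mulmx_sumr summxE => HH; rewrite -[RHS]HH.
  by apply: eq_bigr => m _; rewrite sqnorm_tr trmx_mul !mulmxA.
move=> m; apply: sqnorm_eq0.
move/eqP: E; rewrite psumr_eq0 => [/allP Hm|i _]; last exact: sqnorm_ge0.
by apply/eqP; apply: (Hm m (mem_index_enum m)).
Qed.

Lemma mns_prop (R : realType) d T (n : 'I_T -> nat)
  (X : forall m : 'I_T, 'M[R]_(n m, d)) (y : forall m : 'I_T, 'cV[R]_(n m)) :
  in_ST X y ->
  (forall m, X m *m min_norm_sol X y = y m) /\ sqnorm (min_norm_sol X y) <= 1.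
Proof.
case=> _ [_ [w0 [Hw0 Hsol]]].
set M := \sum_(m < T) (X m)^T *m X m.
set Q := pinv M *m M.
have HM : forall v, (forall m, X m *m v = y m) -> Q *m v = Q *m w0.
  move=> v Hv; apply/eqP; rewrite -subr_eq0 -mulmxBr /Q -mulmxA.
  have -> : M *m (v - w0) = 0.
    rewrite /M mulmx_suml; apply: big1 => m _.
    by rewrite -mulmxA mulmxBr Hv Hsol subrr mulmx0.
  by rewrite mulmx0.
have Hc : forall m, X m *m (Q *m w0) = y m.
  move=> m; rewrite -(Hsol m); apply/eqP; rewrite -subr_eq0 -mulmxBr; apply/eqP.
  apply: (ker_sum (X:=X)).
  rewrite -/M mulmxBr mulmxA /Q mulmxA.
  by case: (pinvP M) => -> _ _ _; rewrite subrr.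
have Hmin : forall v, (forall m, X m *m v = y m) -> sqnorm (Q *m w0) <= sqnorm v.
  move=> v Hv; rewrite (sqnorm_decomp v (Qsym M) (Qidem M)) -(HM v Hv).
  by rewrite lerDl sqnorm_ge0.
have Hex : exists w, (forall m, X m *m w = y m) /\
     forall v, (forall m, X m *m v = y m) -> sqnorm w <= sqnorm v.
  by exists (Q *m w0).
have := epsilon_spec (inhabits 0) _ Hex; rewrite -/(min_norm_sol X y).
case=> H1 H2; split => //.
exact: le_trans (H2 _ Hsol) Hw0.
Qed.

Definition pre (T k : nat) (tau : {ffun 'I_k -> 'I_T}) (t : nat) : seq 'I_T :=
  take t [seq tau i | i <- enum 'I_k].

Lemma pre_rcons T k (tau : {ffun 'I_k -> 'I_T}) (i : 'I_k) :
  pre tau i.+1 = rcons (pre tau i) (tau i).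
Proof.
rewrite /pre (take_nth (tau i)); last by rewrite size_map size_enum_ord.
by rewrite (nth_map i) ?size_enum_ord // nth_ord_enum.
Qed.

Lemma pre_eq T k (tau1 tau2 : {ffun 'I_k -> 'I_T}) (t : nat) :
  (forall j : 'I_k, (j < t)%N -> tau1 j = tau2 j) -> pre tau1 t = pre tau2 t.
Proof.
move=> H; rewrite /pre -(map_take t tau1 (enum 'I_k)) -(map_take t tau2 (enum 'I_k)); apply/eq_in_map => j Hj; apply: H.
have := map_f val Hj.
rewrite (map_take t val (enum 'I_k)) val_enum_ord take_iota mem_iota leq_min => /andP [_ /andP [] //].
Qed.

Lemma indep (R : realType) T k (hT : (1 <= T)%N) (i : 'I_k)
  (F : 'I_T -> seq 'I_T -> R) :
  T%:R * \sum_(tau : {ffun 'I_k -> 'I_T}) F (tau i) (pre tau i)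
  = \sum_(tau : {ffun 'I_k -> 'I_T}) \sum_(m < T) F m (pre tau i).
Proof.
move: F; case: T hT => // T' _ F.
set L := \sum_tau _.
have Hsh : forall m : 'I_T'.+1, L = \sum_(tau : {ffun 'I_k -> 'I_T'.+1}) F (tau i + m) (pre tau i).
  move=> m.
  pose sh := fun tau : {ffun 'I_k -> 'I_T'.+1} =>
     [ffun j => if j == i then tau j + m else tau j].
  have shI : injective sh.
    move=> t1 t2 /ffunP E; apply/ffunP => j; have := E j; rewrite !ffunE.
    by case: ifP => _ // /addIr.
  rewrite /L (reindex_inj shI); apply: eq_bigr => tau _.
  rewrite ffunE eqxx; congr F; apply: pre_eq => j Hj.
  by rewrite ffunE; case: eqP => // Ej; rewrite Ej ltnn in Hj.
have -> : T'.+1%:R * L = \sum_(m < T'.+1) L by rewrite sumr_const card_ord mulr_natl.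
rewrite (eq_bigr _ (fun m _ => Hsh m)) exchange_big /=.
apply: eq_bigr => tau _.
by rewrite [RHS](reindex_inj (addrI (tau i))).
Qed.

Lemma sq_sum_le (R : realType) (k : nat) (x : nat -> R) : (1 <= k)%N ->
  (\sum_(1 <= t < k.+1) x t) ^+ 2 <= k%:R * \sum_(1 <= t < k.+1) x t ^+ 2.
Proof.
move=> hk.
set S := \sum_(1 <= t < k.+1) x t; set Q2 := \sum_(1 <= t < k.+1) x t ^+ 2.
have k0 : k%:R != 0 :> R by rewrite pnatr_eq0 -lt0n.
set a := S / k%:R.
have ak : a * k%:R = S by rewrite /a mulfVK.
have H : 0 <= \sum_(1 <= t < k.+1) (x t - a) ^+ 2 by apply: sumr_ge0 => t _; apply: sqr_ge0.
have E : \sum_(1 <= t < k.+1) (x t - a) ^+ 2 = Q2 - a *+ 2 * S + a ^+ 2 * k%:R.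
  under eq_bigr do rewrite sqrrB.
  rewrite big_split sumrB /= sumr_const_nat subSS subn0 /Q2 /S mulr_sumr.
  rewrite -mulr_natr; congr (_ - _ + _); last by rewrite mulr_natr.
  by apply: eq_bigr => t _; rewrite -mulr_natr; ring.
rewrite E in H; clear E; clearbody a S Q2.
have H2 : 0 <= k%:R * (Q2 - a *+ 2 * S + a ^+ 2 * k%:R) by rewrite mulr_ge0 ?ler0n.
have E2 : k%:R * (Q2 - a *+ 2 * S + a ^+ 2 * k%:R) = k%:R * Q2 - S ^+ 2.
  by rewrite -ak; ring.
by rewrite E2 in H2; rewrite -subr_ge0.
Qed.

Lemma sqnorm_sum_le (R : realType) q (k : nat) (v : nat -> 'cV[R]_q) : (1 <= k)%N ->
  sqnorm (\sum_(1 <= t < k.+1) v t) <= k%:R * \sum_(1 <= t < k.+1) sqnorm (v t).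
Proof.
move=> hk; rewrite /sqnorm.
rewrite [X in _ <= _ * X](exchange_big_dep xpredT) //= mulr_sumr.
apply: ler_sum => i _; rewrite summxE; exact: sq_sum_le.
Qed.

Lemma sqnorm_avg (R : realType) q (k : nat) (v : nat -> 'cV[R]_q) : (1 <= k)%N ->
  sqnorm (k%:R^-1 *: \sum_(1 <= t < k.+1) v t)
  <= k%:R^-1 * \sum_(1 <= t < k.+1) sqnorm (v t).
Proof.
move=> hk; rewrite sqnormZ.
have k0 : k%:R != 0 :> R by rewrite pnatr_eq0 -lt0n.
have -> : k%:R^-1 * \sum_(1 <= t < k.+1) sqnorm (v t)
   = k%:R^-1 ^+ 2 * (k%:R * \sum_(1 <= t < k.+1) sqnorm (v t)).
  by rewrite expr2 -mulrA mulKf.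
by apply: ler_wpM2l; [apply: sqr_ge0 | apply: sqnorm_sum_le].
Qed.

Lemma err_rcons (R : realType) d T (n : 'I_T -> nat)
  (X : forall m : 'I_T, 'M[R]_(n m, d)) (y : forall m : 'I_T, 'cV[R]_(n m))
  (ws : 'cV[R]_d) (Hws : forall m, X m *m ws = y m) (s : seq 'I_T) (m : 'I_T) :
  iterate X y (rcons s m) - ws
  = (iterate X y s - ws) - (pinv (X m) *m X m) *m (iterate X y s - ws).
Proof.
rewrite /iterate foldl_rcons -/(iterate X y s) /step -(Hws m).
set w := iterate X y s.
by rewrite -mulmxBr -mulmxA -(opprB w ws) !mulmxN addrAC.
Qed.

Lemma err_norm (R : realType) d T (n : 'I_T -> nat)
  (X : forall m : 'I_T, 'M[R]_(n m, d)) (y : forall m : 'I_T, 'cV[R]_(n m))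
  (ws : 'cV[R]_d) (Hws : forall m, X m *m ws = y m) (s : seq 'I_T) (m : 'I_T) :
  sqnorm (iterate X y (rcons s m) - ws)
  = sqnorm (iterate X y s - ws) - sqnorm ((pinv (X m) *m X m) *m (iterate X y s - ws)).
Proof.
rewrite (err_rcons Hws) [sqnorm (iterate X y s - ws)](sqnorm_decomp _ (Qsym (X m)) (Qidem (X m))).
by rewrite [sqnorm (_ *m _) + _]addrC addrK.
Qed.

Lemma Qle (R : realType) p q (A : 'M[R]_(p, q)) (v : 'cV[R]_q) :
  sqnorm ((pinv A *m A) *m v) <= sqnorm v.
Proof. by rewrite [leRHS](sqnorm_decomp _ (Qsym A) (Qidem A)) lerDl sqnorm_ge0. Qed.

Lemma err_le1 (R : realType) d T (n : 'I_T -> nat)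
  (X : forall m : 'I_T, 'M[R]_(n m, d)) (y : forall m : 'I_T, 'cV[R]_(n m))
  (ws : 'cV[R]_d) (Hws : forall m, X m *m ws = y m) (H1 : sqnorm ws <= 1) (s : seq 'I_T) :
  sqnorm (iterate X y s - ws) <= 1.
Proof.
elim/last_ind: s => [|s m IH].
  by rewrite /iterate /= sub0r sqnormN.
by rewrite (err_norm Hws); apply: le_trans IH; rewrite gerDl oppr_le0 sqnorm_ge0.
Qed.

Lemma step_exp (R : realType) d T (n : 'I_T -> nat)
  (X : forall m : 'I_T, 'M[R]_(n m, d)) (y : forall m : 'I_T, 'cV[R]_(n m))
  (ws : 'cV[R]_d) (Hws : forall m, X m *m ws = y m) (hT : (1 <= T)%N) k (i : 'I_k) :
  \sum_(tau : {ffun 'I_k -> 'I_T})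
     (T%:R^-1 * \sum_(m < T) sqnorm ((pinv (X m) *m X m) *m (iterate X y (pre tau i) - ws)))
  = \sum_(tau : {ffun 'I_k -> 'I_T}) sqnorm (iterate X y (pre tau i) - ws)
    - \sum_(tau : {ffun 'I_k -> 'I_T}) sqnorm (iterate X y (pre tau i.+1) - ws).
Proof.
have T0 : T%:R != 0 :> R by rewrite pnatr_eq0 -lt0n.
pose F := fun (m : 'I_T) (s : seq 'I_T) =>
  sqnorm (iterate X y s - ws) - sqnorm ((pinv (X m) *m X m) *m (iterate X y s - ws)).
have E1 : \sum_(tau : {ffun 'I_k -> 'I_T}) sqnorm (iterate X y (pre tau i.+1) - ws)
   = \sum_(tau : {ffun 'I_k -> 'I_T}) F (tau i) (pre tau i).
  by apply: eq_bigr => tau _; rewrite pre_rcons (err_norm Hws).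
have E2 := indep hT i F.
have E3 : \sum_(tau : {ffun 'I_k -> 'I_T}) F (tau i) (pre tau i)
   = T%:R^-1 * \sum_(tau : {ffun 'I_k -> 'I_T}) \sum_(m < T) F m (pre tau i).
  by rewrite -E2 mulrA mulVf // mul1r.
rewrite E1 E3 mulr_sumr -sumrB; apply: eq_bigr => tau _.
have HT : forall a : R, T%:R^-1 * (a *+ T) = a by move=> a; rewrite -[a *+ T]mulr_natl mulKf.
rewrite /F sumrB sumr_const card_ord mulrBr HT.
by rewrite opprB [RHS]addrC subrK.
Qed.

Lemma rearr (R : realType) (I : finType) (K : nat) (a b : R) (f : I -> nat -> R) :
  a * \sum_(i : I) (b * \sum_(1 <= t < K) f i t)
  = b * \sum_(1 <= t < K) (a * \sum_(i : I) f i t).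
Proof.
have L : a * \sum_(i : I) (b * \sum_(1 <= t < K) f i t)
   = \sum_(i : I) \sum_(1 <= t < K) (a * b * f i t).
  rewrite mulr_sumr; apply: eq_bigr => i _.
  by rewrite !mulr_sumr; apply: eq_bigr => t _; rewrite mulrA.
have Rr : b * \sum_(1 <= t < K) (a * \sum_(i : I) f i t)
   = \sum_(1 <= t < K) \sum_(i : I) (a * b * f i t).
  rewrite mulr_sumr; apply: eq_bigr => t _.
  by rewrite !mulr_sumr; apply: eq_bigr => i _; rewrite mulrCA mulrA.
by rewrite L Rr exchange_big.
Qed.

Theorem mainTheorem18 (R : realType) (d T : nat) (n : 'I_T -> nat)
  (X : forall m : 'I_T, 'M[R]_(n m, d)) (y : forall m : 'I_T, 'cV[R]_(n m))
  (hd : (1 <= d)%N) (hT : (1 <= T)%N) (hS : in_ST X y) (k : nat) (hk : (1 <= k)%N) :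
  expect_unif (fun tau : {ffun 'I_k -> 'I_T} =>
     T%:R^-1 * \sum_(m < T) sqnorm (X m *m avg_iterate X y tau - y m))
  <= expect_unif (fun tau : {ffun 'I_k -> 'I_T} =>
     T%:R^-1 * \sum_(m < T)
        sqnorm ((1%:M - projker (X m)) *m (avg_iterate X y tau - min_norm_sol X y)))
  /\
  expect_unif (fun tau : {ffun 'I_k -> 'I_T} =>
     T%:R^-1 * \sum_(m < T)
        sqnorm ((1%:M - projker (X m)) *m (avg_iterate X y tau - min_norm_sol X y)))
  <= k%:R^-1.
Proof.
have T0 : T%:R != 0 :> R by rewrite pnatr_eq0 -lt0n.
have k0 : k%:R != 0 :> R by rewrite pnatr_eq0 -lt0n.
have [Hws Hw1] := mns_prop hS.
set ws := min_norm_sol X y.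
case: hS => _ [Hspec _].
have IQ : forall m, 1%:M - projker (X m) = pinv (X m) *m X m.
  by move=> m; rewrite /projker opprB addrC subrK.
have Hmono : forall F G : {ffun 'I_k -> 'I_T} -> R,
    (forall tau, F tau <= G tau) -> expect_unif F <= expect_unif G.
  by move=> F G H; rewrite /expect_unif ler_wpM2l ?invr_ge0 ?ler0n // ler_sum.
split.
  apply: Hmono => tau; rewrite ler_wpM2l ?invr_ge0 ?ler0n //; apply: ler_sum => m _.
  have -> : X m *m avg_iterate X y tau - y m
     = X m *m ((pinv (X m) *m X m) *m (avg_iterate X y tau - ws)).
    by rewrite mulmxA AQ mulmxBr Hws.
  rewrite IQ; exact: Hspec.
pose E := fun (tau : {ffun 'I_k -> 'I_T}) (t : nat) => iterate X y (pre tau t) - ws.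
pose phi := fun (tau : {ffun 'I_k -> 'I_T}) (t : nat) =>
  T%:R^-1 * \sum_(m < T) sqnorm ((pinv (X m) *m X m) *m E tau t).
pose c : R := (T ^ k)%:R^-1.
pose g := fun t => c * \sum_(tau : {ffun 'I_k -> 'I_T}) sqnorm (E tau t).
have HC : \sum_(1 <= t < k.+1) (c * \sum_(tau : {ffun 'I_k -> 'I_T}) phi tau t) <= 1.
  have HT : forall a : R, T%:R^-1 * (a *+ T) = a.
    by move=> a; rewrite -[a *+ T]mulr_natl mulKf.
  have Hstep : forall t, (t < k)%N -> c * \sum_(tau : {ffun 'I_k -> 'I_T}) phi tau t = g t - g t.+1.
    move=> t ht; have := step_exp Hws hT (Ordinal ht); rewrite /= => H.
    by rewrite /phi /g /E H mulrBr.
  have Hlast : c * \sum_(tau : {ffun 'I_k -> 'I_T}) phi tau k <= g k.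
    rewrite /g ler_wpM2l ?invr_ge0 ?ler0n //; apply: ler_sum => tau _.
    apply: (@le_trans _ _ (T%:R^-1 * \sum_(m < T) sqnorm (E tau k))).
      rewrite /phi ler_wpM2l ?invr_ge0 ?ler0n //; apply: ler_sum => m _; exact: Qle.
    by rewrite sumr_const card_ord HT.
  have Hg1 : g 1%N <= 1.
    rewrite /g; apply: (@le_trans _ _ (c * \sum_(tau : {ffun 'I_k -> 'I_T}) 1)).
      rewrite ler_wpM2l ?invr_ge0 ?ler0n //; apply: ler_sum => tau _; exact: err_le1.
    rewrite sumr_const card_ffun !card_ord /c mulVf //.
    by rewrite pnatr_eq0 -lt0n expn_gt0 hT.
  have Hsum : \sum_(1 <= t < k) (c * \sum_(tau : {ffun 'I_k -> 'I_T}) phi tau t) = g 1%N - g k.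
    have := telescope_sumr g hk; move=> Ht.
    rewrite -opprB -Ht -sumrN; apply: eq_big_nat => t /andP [_ ht].
    by rewrite Hstep // opprB.
  rewrite big_nat_recr //= Hsum.
  have := lerD (lexx (g 1%N - g k)) Hlast; rewrite subrK => H; exact: le_trans H Hg1.
apply: (le_trans (Hmono _ (fun tau => k%:R^-1 * \sum_(1 <= t < k.+1) phi tau t) _)).
  move=> tau.
  have Havg : avg_iterate X y tau - ws = k%:R^-1 *: \sum_(1 <= t < k.+1) E tau t.
    rewrite /E sumrB sumr_const_nat subSS subn0 scalerBr -scaler_nat scalerA mulVf // scale1r.
    by [].
  rewrite (eq_bigr (fun m => sqnorm (k%:R^-1 *: \sum_(1 <= t < k.+1) ((pinv (X m) *m X m) *m E tau t)))); last first.
    by move=> m _; rewrite IQ Havg -scalemxAr mulmx_sumr.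
  apply: (@le_trans _ _ (T%:R^-1 * \sum_(m < T) (k%:R^-1 * \sum_(1 <= t < k.+1) sqnorm ((pinv (X m) *m X m) *m E tau t)))).
    rewrite ler_wpM2l ?invr_ge0 ?ler0n //; apply: ler_sum => m _; exact: sqnorm_avg.
  by rewrite rearr.
rewrite /expect_unif rearr -/c.
by rewrite -[leRHS]mulr1 ler_wpM2l ?invr_ge0 ?ler0n.
Qed.
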